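(* In any Poisson $H$-pseudoalgebra $V$ the right Leibniz rule holds: $[ab*c]=a[b*c]+(-1)^{p(a)p(b)}b[a*c]$ for all $a,b,c\in V$.
   Context: $H$ is a cocommutative Hopf algebra over a field $\mathbb F$ of characteristic $0$ (purely even), coproduct $\Delta(h)=h_{(1)}\otimes h_{(2)}$, antipode $S$, $h_{(1)}\otimes h_{(-2)}:=(\mathrm{id}\otimes S)\Delta(h)$, iterated coproduct $h_{(1)}\otimes h_{(2)}\otimes h_{(3)}$. $H^{\otimes r}$ is a right $H$-module via $(h_1\otimes\dots\otimes h_r)h=h_1h_{(1)}\otimes\dots\otimes h_rh_{(r)}$ and $H^{\otimes r}\otimes_H L$ the corresponding tensor product. A Lie $H$-pseudoalgebra is a vector superspace $L$ (parity $p$) with a left $H$-module structure and an even linear map $L\otimes L\to(H\otimes H)\otimes_HL$, $a\otimes b\mapsto[a*b]$, such that for $a,b,c\in L$, $f,g\in H$, $\sigma=(12)$: $[fa*gb]=((f\otimes g)\otimes_H1)[a*b]$; $[b*a]=-(-1)^{p(a)p(b)}(\sigma\otimes_H\mathrm{id})[a*b]$; and $[a*[b*c]]-(-1)^{p(a)p(b)}((\sigma\otimes\mathrm{id})\otimes_H\mathrm{id})[b*[a*c]]=[[a*b]*c]$ in $H^{\otimes3}\otimes_HL$, where, if $[a*b]=\sum_i(f_i\otimes g_i)\otimes_He_i$ and $[e_i*c]=\sum_j(f_{ij}\otimes g_{ij})\otimes_He_{ij}$, then $[[a*b]*c]=\sum_{i,j}(f_if_{ij(1)}\otimes g_if_{ij(2)}\otimes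 g_{ij})\otimes_He_{ij}$, and if $[b*c]=\sum_i(h_i\otimes l_i)\otimes_Hd_i$, $[a*d_i]=\sum_j(h_{ij}\otimes l_{ij})\otimes_Hd_{ij}$, then $[a*[b*c]]=\sum_{i,j}(h_{ij}\otimes h_il_{ij(1)}\otimes l_il_{ij(2)})\otimes_Hd_{ij}$. A Poisson $H$-pseudoalgebra is a Lie $H$-pseudoalgebra $V$ with an even supercommutative associative product $V\otimes V\to V$ such that $h(ab)=(h_{(1)}a)(h_{(2)}b)$ and $[a*bc]=[a*b]c+(-1)^{p(b)p(c)}[a*c]b$, where for $[a*b]=\sum_i(f_i\otimes g_i)\otimes_He_i$ one sets $[a*b]c:=\sum_i(f_i\otimes g_{i(1)})\otimes_He_i(g_{i(-2)}c)$ (well defined). Similarly, for $[b*c]=\sum_i(h_i\otimes l_i)\otimes_Hd_i$, $a[b*c]:=\sum_i(h_{i(1)}\otimes l_i)\otimes_H(h_{i(-2)}a)d_i$. *)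

(* Defs.v *)
From HB Require Import structures.
From mathcomp Require Import all_boot all_order all_algebra.
From Stdlib Require List.
Set Implicit Arguments. Unset Strict Implicit. Unset Printing Implicit Defensive.
Import GRing.Theory.
Local Open Scope ring_scope.

(* An element of a tensor product is represented by a finite formal sum     *)
(* (a list) of pure tensors; scalars and signs are absorbed into the first    *)
(* tensor factor.  Two formal sums denote the same element iff they are       *)
(* related by the smallest commutative-monoid congruence containing the        *)
(* defining relations of the tensor product.                                  *)

Section Formal.
Variable T : Type.
Variable R : seq T -> seq T -> Prop.
Inductive fcong : seq T -> seq T -> Prop :=
| fc_rel s t : R s t -> fcong s t
| fc_refl s : fcong s s
| fc_sym s t : fcong s t -> fcong t s
| fc_trans s t u : fcong s t -> fcong t u -> fcong s u
| fc_comm s t : fcong (s ++ t) (t ++ s)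
| fc_cat s1 s2 t1 t2 : fcong s1 t1 -> fcong s2 t2 -> fcong (s1 ++ s2) (t1 ++ t2).
End Formal.

Section Tensors.
Variable F : fieldType.

Inductive relHH (H : lmodType F) : seq (H * H) -> seq (H * H) -> Prop :=
| rHH_add1 x y b : relHH [:: (x + y, b)] [:: (x, b); (y, b)]
| rHH_add2 a x y : relHH [:: (a, x + y)] [:: (a, x); (a, y)]
| rHH_sc2 (k : F) a b : relHH [:: (k *: a, b)] [:: (a, k *: b)]
| rHH_zero1 b : relHH [:: (0, b)] [::].

Inductive relHHH (H : lmodType F) : seq (H * H * H) -> seq (H * H * H) -> Prop :=
| rHHH_add1 x y b c : relHHH [:: (x + y, b, c)] [:: (x, b, c); (y, b, c)]
| rHHH_add2 a x y c : relHHH [:: (a, x + y, c)] [:: (a, x, c); (a, y, c)]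
| rHHH_add3 a b x y : relHHH [:: (a, b, x + y)] [:: (a, b, x); (a, b, y)]
| rHHH_sc2 (k : F) a b c : relHHH [:: (k *: a, b, c)] [:: (a, k *: b, c)]
| rHHH_sc3 (k : F) a b c : relHHH [:: (k *: a, b, c)] [:: (a, b, k *: c)]
| rHHH_zero1 b c : relHHH [:: (0, b, c)] [::].

Variables (H : algType F) (V : lmodType F).
Variable cop : H -> seq (H * H).
Variable act : H -> V -> V.

Definition cop3 (h : H) : seq (H * H * H) :=
  flatten [seq [seq (y.1, y.2, x.2) | y <- cop x.1] | x <- cop h].

(* (H (x) H) (x)_H V, pure tensors (f, g, e) = (f (x) g) (x)_H e;
   right H-action on H (x) H: (f (x) g) h = f h_(1) (x) g h_(2). *)
Inductive relT2 : seq (H * H * V) -> seq (H * H * V) -> Prop :=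
| r2_add1 x y g e : relT2 [:: (x + y, g, e)] [:: (x, g, e); (y, g, e)]
| r2_add2 f x y e : relT2 [:: (f, x + y, e)] [:: (f, x, e); (f, y, e)]
| r2_add3 f g x y : relT2 [:: (f, g, x + y)] [:: (f, g, x); (f, g, y)]
| r2_sc2 (k : F) f g e : relT2 [:: (k *: f, g, e)] [:: (f, k *: g, e)]
| r2_sc3 (k : F) f g e : relT2 [:: (k *: f, g, e)] [:: (f, g, k *: e)]
| r2_zero1 g e : relT2 [:: (0, g, e)] [::]
| r2_bal f g h e :
    relT2 [seq (f * x.1, g * x.2, e) | x <- cop h] [:: (f, g, act h e)].

(* (H (x) H (x) H) (x)_H V, pure tensors (f, g, k, e);
   right H-action: (f (x) g (x) k) h = f h_(1) (x) g h_(2) (x) k h_(3). *)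
Inductive relT3 : seq (H * H * H * V) -> seq (H * H * H * V) -> Prop :=
| r3_add1 x y g k e : relT3 [:: (x + y, g, k, e)] [:: (x, g, k, e); (y, g, k, e)]
| r3_add2 f x y k e : relT3 [:: (f, x + y, k, e)] [:: (f, x, k, e); (f, y, k, e)]
| r3_add3 f g x y e : relT3 [:: (f, g, x + y, e)] [:: (f, g, x, e); (f, g, y, e)]
| r3_add4 f g k x y : relT3 [:: (f, g, k, x + y)] [:: (f, g, k, x); (f, g, k, y)]
| r3_sc2 (c : F) f g k e : relT3 [:: (c *: f, g, k, e)] [:: (f, c *: g, k, e)]
| r3_sc3 (c : F) f g k e : relT3 [:: (c *: f, g, k, e)] [:: (f, g, c *: k, e)]
| r3_sc4 (c : F) f g k e : relT3 [:: (c *: f, g, k, e)] [:: (f, g, k, c *: e)]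
| r3_zero1 g k e : relT3 [:: (0, g, k, e)] [::]
| r3_bal f g k h e :
    relT3 [seq (f * x.1.1, g * x.1.2, k * x.2, e) | x <- cop3 h]
          [:: (f, g, k, act h e)].

Definition scaleT2 (c : F) (s : seq (H * H * V)) : seq (H * H * V) :=
  [seq (c *: t.1.1, t.1.2, t.2) | t <- s].
Definition scaleT3 (c : F) (s : seq (H * H * H * V)) : seq (H * H * H * V) :=
  [seq (c *: t.1.1.1, t.1.1.2, t.1.2, t.2) | t <- s].

Definition swapT2 (s : seq (H * H * V)) : seq (H * H * V) :=
  [seq (t.1.2, t.1.1, t.2) | t <- s].
Definition swap12T3 (s : seq (H * H * H * V)) : seq (H * H * H * V) :=
  [seq (t.1.1.2, t.1.1.1, t.1.2, t.2) | t <- s].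

Variable ant : H -> H.
Variable pmul : V -> V -> V.
Variable br : V -> V -> seq (H * H * V).

(* [a*b]c := sum (f_i (x) g_i(1)) (x)_H e_i (g_i(-2) c) *)
Definition rmulT (s : seq (H * H * V)) (c : V) : seq (H * H * V) :=
  flatten [seq [seq (t.1.1, x.1, pmul t.2 (act (ant x.2) c)) | x <- cop t.1.2]
          | t <- s].
(* a[b*c] := sum (h_i(1) (x) l_i) (x)_H (h_i(-2) a) d_i *)
Definition lmulT (a : V) (s : seq (H * H * V)) : seq (H * H * V) :=
  flatten [seq [seq (x.1, t.1.2, pmul (act (ant x.2) a) t.2) | x <- cop t.1.1]
          | t <- s].

(* [a*[b*c]] where s represents [b*c] *)
Definition brL (a : V) (s : seq (H * H * V)) : seq (H * H * H * V) :=
  flatten [seq flatten [seq [seq (u.1.1, t.1.1 * x.1, t.1.2 * x.2, u.2)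
                            | x <- cop u.1.2]
                       | u <- br a t.2]
          | t <- s].
(* [[a*b]*c] where s represents [a*b] *)
Definition brR (s : seq (H * H * V)) (c : V) : seq (H * H * H * V) :=
  flatten [seq flatten [seq [seq (t.1.1 * x.1, t.1.2 * x.2, u.1.2, u.2)
                            | x <- cop u.1.1]
                       | u <- br t.2 c]
          | t <- s].

End Tensors.

Record cocomHopf (F : fieldType) (H : algType F) := CocomHopf {
  cop : H -> seq (H * H);
  cou : H -> F;
  ant : H -> H;
  cop_add : forall h k, fcong (@relHH F H) (cop (h + k)) (cop h ++ cop k);
  cop_scale : forall (c : F) h,
    fcong (@relHH F H) (cop (c *: h)) [seq (c *: x.1, x.2) | x <- cop h];
  cop_mul : forall h k, fcong (@relHH F H) (cop (h * k))
    (flatten [seq [seq (x.1 * y.1, x.2 * y.2) | y <- cop k] | x <- cop h]);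
  cop_one : fcong (@relHH F H) (cop 1) [:: (1, 1)];
  cop_coass : forall h, fcong (@relHHH F H)
    (flatten [seq [seq (y.1, y.2, x.2) | y <- cop x.1] | x <- cop h])
    (flatten [seq [seq (x.1, y.1, y.2) | y <- cop x.2] | x <- cop h]);
  cou_add : forall h k, cou (h + k) = cou h + cou k;
  cou_scale : forall (c : F) h, cou (c *: h) = c * cou h;
  cou_mul : forall h k, cou (h * k) = cou h * cou k;
  cou_one : cou 1 = 1;
  counit_l : forall h, \sum_(x <- cop h) cou x.1 *: x.2 = h;
  counit_r : forall h, \sum_(x <- cop h) cou x.2 *: x.1 = h;
  ant_add : forall h k, ant (h + k) = ant h + ant k;
  ant_scale : forall (c : F) h, ant (c *: h) = c *: ant h;
  antipode_l : forall h, \sum_(x <- cop h) ant x.1 * x.2 = cou h *: 1;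
  antipode_r : forall h, \sum_(x <- cop h) x.1 * ant x.2 = cou h *: 1;
  cocomm : forall h, fcong (@relHH F H) (cop h) [seq (x.2, x.1) | x <- cop h]
}.

(* par i v  <->  v is homogeneous of parity i (false = even, true = odd).     *)
Record poissonPseudo (F : fieldType) (H : algType F) (HD : cocomHopf H)
    (V : lmodType F) := PoissonPseudo {
  par : bool -> V -> Prop;
  act : H -> V -> V;
  br : V -> V -> seq (H * H * V);
  pmul : V -> V -> V;
  par0 : forall i, par i 0;
  parD : forall i u v, par i u -> par i v -> par i (u + v);
  parZ : forall i (k : F) v, par i v -> par i (k *: v);
  par_decomp : forall v, exists v0 v1, [/\ par false v0, par true v1 & v = v0 + v1];
  par_disj : forall v, par false v -> par true v -> v = 0;
  (* left H-module (H purely even, so the action preserves parity) *)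
  act_addl : forall h k v, act (h + k) v = act h v + act k v;
  act_scalel : forall (c : F) h v, act (c *: h) v = c *: act h v;
  act_addr : forall h u v, act h (u + v) = act h u + act h v;
  act_scaler : forall (c : F) h v, act h (c *: v) = c *: act h v;
  act_one : forall v, act 1 v = v;
  act_mul : forall h k v, act (h * k) v = act h (act k v);
  act_par : forall i h v, par i v -> par i (act h v);
  br_addl : forall a a' b,
    fcong (relT2 (cop HD) act) (br (a + a') b) (br a b ++ br a' b);
  br_addr : forall a b b',
    fcong (relT2 (cop HD) act) (br a (b + b')) (br a b ++ br a b');
  br_even : forall i j a b, par i a -> par j b ->
    exists s, fcong (relT2 (cop HD) act) (br a b) s /\
              (forall t, List.In t s -> par (addb i j) t.2);
  br_sesq : forall f g a b,
    fcong (relT2 (cop HD) act) (br (act f a) (act g b))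
          [seq (f * t.1.1, g * t.1.2, t.2) | t <- br a b];
  br_skew : forall i j a b, par i a -> par j b ->
    fcong (relT2 (cop HD) act) (br b a)
          (scaleT2 (- (-1) ^+ (i && j)) (swapT2 (br a b)));
  br_jacobi : forall i j k a b c, par i a -> par j b -> par k c ->
    fcong (relT3 (cop HD) act)
          (brL (cop HD) br a (br b c) ++
           scaleT3 (- (-1) ^+ (i && j)) (swap12T3 (brL (cop HD) br b (br a c))))
          (brR (cop HD) br (br a b) c);
  pmul_addl : forall a a' b, pmul (a + a') b = pmul a b + pmul a' b;
  pmul_addr : forall a b b', pmul a (b + b') = pmul a b + pmul a b';
  pmul_scalel : forall (k : F) a b, pmul (k *: a) b = k *: pmul a b;
  pmul_scaler : forall (k : F) a b, pmul a (k *: b) = k *: pmul a b;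
  pmul_assoc : forall a b c, pmul a (pmul b c) = pmul (pmul a b) c;
  pmul_par : forall i j a b, par i a -> par j b -> par (addb i j) (pmul a b);
  pmul_supercomm : forall i j a b, par i a -> par j b ->
    pmul a b = (-1) ^+ (i && j) *: pmul b a;
  act_pmul : forall h a b,
    act h (pmul a b) = \sum_(x <- cop HD h) pmul (act x.1 a) (act x.2 b);
  br_leibniz : forall i j k a b c, par i a -> par j b -> par k c ->
    fcong (relT2 (cop HD) act) (br a (pmul b c))
          (rmulT (cop HD) act (ant HD) pmul (br a b) c ++
           scaleT2 ((-1) ^+ (j && k)) (rmulT (cop HD) act (ant HD) pmul (br a c) b))
}.

(* Main.v *)
Require Import Defs.
From HB Require Import structures.
From mathcomp Require Import all_boot all_order all_algebra.
From mathcomp Require Import ring.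
Import GRing.Theory.
Local Open Scope ring_scope.
Set Implicit Arguments. Unset Strict Implicit.

Section FC.
Variable T : Type.
Variable R : seq T -> seq T -> Prop.
Notation "s ≈ t" := (fcong R s t) (at level 70).

Lemma fcT s t u : s ≈ t -> t ≈ u -> s ≈ u. Proof. exact: fc_trans. Qed.
Lemma fcS s t : s ≈ t -> t ≈ s. Proof. exact: fc_sym. Qed.
Lemma fcR s : s ≈ s. Proof. exact: fc_refl. Qed.
Lemma fcC s1 s2 t1 t2 : s1 ≈ t1 -> s2 ≈ t2 -> s1 ++ s2 ≈ t1 ++ t2.
Proof. exact: fc_cat. Qed.
Lemma fcCl s t u : s ≈ t -> u ++ s ≈ u ++ t. Proof. by move=> h; apply: fcC=> //; apply fcR. Qed.
Lemma fcCr s t u : s ≈ t -> s ++ u ≈ t ++ u. Proof. by move=> h; apply: fcC=> //; apply fcR. Qed.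
Lemma fcE s t : s = t -> s ≈ t. Proof. by move->; apply fcR. Qed.

Lemma fc_flat (U : Type) (f g : U -> seq T) (s : seq U) :
  (forall x, List.In x s -> f x ≈ g x) -> flatten (map f s) ≈ flatten (map g s).
Proof.
elim: s => [|x s IH] h /=; first exact: fcR.
apply: fcC; first by apply: h; left.
by apply: IH => y hy; apply: h; right.
Qed.

Lemma fc_lift (T' : Type) (R' : seq T' -> seq T' -> Prop) (f : T' -> seq T) :
  (forall s t, R' s t -> flatten (map f s) ≈ flatten (map f t)) ->
  forall s t, fcong R' s t -> flatten (map f s) ≈ flatten (map f t).
Proof.
move=> hR s t; elim => {s t}.
- by move=> s t /hR.
- by move=> s; apply: fcR.
- by move=> s t _; apply: fcS.
- by move=> s t u _ h1 _ h2; apply: fcT h1 h2.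
- by move=> s t; rewrite !map_cat !flatten_cat; apply: fc_comm.
- by move=> s1 s2 t1 t2 _ h1 _ h2; rewrite !map_cat !flatten_cat; apply: fcC.
Qed.
End FC.

Section FCP.
Variable T : eqType.
Variable R : seq T -> seq T -> Prop.
Notation "s ≈ t" := (fcong R s t) (at level 70).

Lemma fc_perm (s t : seq T) : perm_eq s t -> s ≈ t.
Proof.
elim: s t => [|x s IH] t hp.
  have -> : t = [::] by (apply/nilP; rewrite /nilp -(perm_size hp)).
  by apply: fcR.
have xt : x \in t by rewrite -(perm_mem hp) mem_head.
case/splitPr: xt hp => t1 t2 hp.
have hp' : perm_eq s (t1 ++ t2).
  by rewrite -(perm_cons x); apply: (perm_trans hp); rewrite -[x :: t2]cat1s perm_catCA.
apply: (fcT (t := [:: x] ++ (t1 ++ t2))); first by apply: (@fcCl _ _ s _ [:: x]); apply: IH.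
rewrite catA -cat1s -[_ :: t2]cat1s catA.
by apply: fcCr; apply: fc_comm.
Qed.
End FCP.

Section Perms.
Variable T : eqType.
Lemma perm_mid (x : T) s1 s2 : perm_eq (x :: s1 ++ s2) (s1 ++ x :: s2).
Proof. by rewrite -cat1s -[x :: s2]cat1s perm_catCA. Qed.

Lemma perm_inter (U : Type) (A B : U -> T) (s : seq U) :
  perm_eq (flatten [seq [:: A z; B z] | z <- s]) (map A s ++ map B s).
Proof.
elim: s => [|z s IH] //=.
apply: (@perm_trans _ ([:: A z; B z] ++ (map A s ++ map B s))); first by rewrite /= !perm_cons.
by rewrite /= perm_cons perm_mid.
Qed.

Lemma perm_flat_cat (U : Type) (A B : U -> seq T) (t : seq U) :
  perm_eq (flatten [seq A y ++ B y | y <- t])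
          (flatten (map A t) ++ flatten (map B t)).
Proof.
elim: t => [|y t IH] //=.
apply: (@perm_trans _ ((A y ++ B y) ++ (flatten (map A t) ++ flatten (map B t)))); first by rewrite perm_cat2l.
by rewrite -!catA perm_cat2l perm_catCA.
Qed.

Lemma perm_exch (U W : Type) (Fn : U -> W -> seq T) s t :
  perm_eq (flatten [seq flatten [seq Fn x y | y <- t] | x <- s])
          (flatten [seq flatten [seq Fn x y | x <- s] | y <- t]).
Proof.
elim: s => [|x s IH] /=.
  by elim: t => //.
apply: (@perm_trans _ (flatten [seq Fn x y | y <- t] ++ flatten [seq flatten [seq Fn x0 y | x0 <- s] | y <- t])); first by rewrite perm_cat2l.
rewrite perm_sym.
exact: (perm_flat_cat (fun y => Fn x y) (fun y => flatten [seq Fn x0 y | x0 <- s]) t).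
Qed.
End Perms.

Lemma flat_flat (A B C : Type) (f : B -> seq C) (g : A -> seq B) s :
  flatten (map f (flatten (map g s))) = flatten [seq flatten (map f (g x)) | x <- s].
Proof. by elim: s => //= x s IH; rewrite map_cat flatten_cat IH. Qed.

Lemma flat_map1 (A C : Type) (f : A -> C) s :
  flatten [seq [:: f x] | x <- s] = map f s.
Proof. exact: flatten_map1. Qed.

Section Sums.
Variable F : fieldType.
Variable H : lmodType F.
Variable M : zmodType.

Lemma sumHH (phi : H * H -> M) :
  (forall x y b, phi (x + y, b) = phi (x, b) + phi (y, b)) ->
  (forall a x y, phi (a, x + y) = phi (a, x) + phi (a, y)) ->
  (forall (k : F) a b, phi (k *: a, b) = phi (a, k *: b)) ->
  forall s t, fcong (@relHH F H) s t -> \sum_(x <- s) phi x = \sum_(x <- t) phi x.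
Proof.
move=> h1 h2 h3 s t; elim => {s t}.
- move=> s t [] => [x y b|a x y|k a b|b]; rewrite !big_cons ?big_nil ?addr0 //.
  have e := h1 0 0 b; rewrite addr0 in e.
  by apply: (@addrI _ (phi (0, b))); rewrite addr0 -e.
- by [].
- by move=> s t _ ->.
- by move=> s t u _ -> _ ->.
- by move=> s t; rewrite !big_cat /= addrC.
- by move=> s1 s2 t1 t2 _ e1 _ e2; rewrite !big_cat e1 e2.
Qed.

Lemma sumHHH (phi : H * H * H -> M) :
  (forall x y b c, phi (x + y, b, c) = phi (x, b, c) + phi (y, b, c)) ->
  (forall a x y c, phi (a, x + y, c) = phi (a, x, c) + phi (a, y, c)) ->
  (forall a b x y, phi (a, b, x + y) = phi (a, b, x) + phi (a, b, y)) ->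
  (forall (k : F) a b c, phi (k *: a, b, c) = phi (a, k *: b, c)) ->
  (forall (k : F) a b c, phi (k *: a, b, c) = phi (a, b, k *: c)) ->
  forall s t, fcong (@relHHH F H) s t -> \sum_(x <- s) phi x = \sum_(x <- t) phi x.
Proof.
move=> h1 h2 h3 h4 h5 s t; elim => {s t}.
- move=> s t [] => [x y b c|a x y c|a b x y|k a b c|k a b c|b c];
    rewrite !big_cons ?big_nil ?addr0 //.
  have e := h1 0 0 b c; rewrite addr0 in e.
  by apply: (@addrI _ (phi (0, b, c))); rewrite addr0 -e.
- by [].
- by move=> s t _ ->.
- by move=> s t u _ -> _ ->.
- by move=> s t; rewrite !big_cat /= addrC.
- by move=> s1 s2 t1 t2 _ e1 _ e2; rewrite !big_cat e1 e2.
Qed.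
End Sums.

Section Hopf.
Variable F : fieldType.
Variable H : algType F.
Variable HD : cocomHopf H.
Local Notation D := (cop HD).
Local Notation S := (ant HD).
Local Notation ep := (cou HD).

Definition HHc (M : zmodType) (phi : H * H -> M) :=
  [/\ (forall x y b, phi (x + y, b) = phi (x, b) + phi (y, b)),
      (forall a x y, phi (a, x + y) = phi (a, x) + phi (a, y)) &
      (forall (k : F) a b, phi (k *: a, b) = phi (a, k *: b))].

Definition HHHc (M : zmodType) (phi : H * H * H -> M) :=
  [/\ (forall x y b c, phi (x + y, b, c) = phi (x, b, c) + phi (y, b, c)),
      (forall a x y c, phi (a, x + y, c) = phi (a, x, c) + phi (a, y, c)),
      (forall a b x y, phi (a, b, x + y) = phi (a, b, x) + phi (a, b, y)),
      (forall (k : F) a b c, phi (k *: a, b, c) = phi (a, k *: b, c)) &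
      (forall (k : F) a b c, phi (k *: a, b, c) = phi (a, b, k *: c))].

Lemma HHc_sum (M : zmodType) (I : Type) (r : seq I) (phi : I -> H * H -> M) :
  (forall j, HHc (phi j)) -> HHc (fun t => \sum_(j <- r) phi j t).
Proof.
move=> h; split.
- by move=> x y b; rewrite -big_split; apply: eq_bigr => j _; case: (h j) => ->.
- by move=> a x y; rewrite -big_split; apply: eq_bigr => j _; case: (h j) => _ ->.
- by move=> k a b; apply: eq_bigr => j _; case: (h j) => _ _ ->.
Qed.

Lemma HHHc_sum (M : zmodType) (I : Type) (r : seq I) (phi : I -> H * H * H -> M) :
  (forall j, HHHc (phi j)) -> HHHc (fun t => \sum_(j <- r) phi j t).
Proof.
move=> h; split.
- by move=> x y b c; rewrite -big_split; apply: eq_bigr => j _; case: (h j) => ->.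
- by move=> a x y c; rewrite -big_split; apply: eq_bigr => j _; case: (h j) => _ ->.
- by move=> a b x y; rewrite -big_split; apply: eq_bigr => j _; case: (h j) => _ _ ->.
- by move=> k a b c; apply: eq_bigr => j _; case: (h j) => _ _ _ ->.
- by move=> k a b c; apply: eq_bigr => j _; case: (h j) => _ _ _ _ ->.
Qed.

Lemma sumHH' (M : zmodType) (phi : H * H -> M) s t :
  HHc phi -> fcong (@relHH F H) s t -> \sum_(x <- s) phi x = \sum_(x <- t) phi x.
Proof. by case=> h1 h2 h3; apply: sumHH. Qed.

Lemma coassS (M : zmodType) (phi : H * H * H -> M) h : HHHc phi ->
  \sum_(x <- D h) \sum_(y <- D x.1) phi (y.1, y.2, x.2) =
  \sum_(x <- D h) \sum_(y <- D x.2) phi (x.1, y.1, y.2).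
Proof.
case=> h1 h2 h3 h4 h5.
have := sumHHH h1 h2 h3 h4 h5 (cop_coass HD h).
rewrite !big_flatten !big_map => e.
rewrite (eq_bigr (fun x => \sum_(y <- [seq (y.1, y.2, x.2) | y <- D x.1]) phi y)); last first.
  by move=> x _; rewrite big_map.
rewrite e; apply: eq_bigr => x _; rewrite big_map //.
Qed.

Lemma mulS (M : zmodType) (phi : H * H -> M) h k : HHc phi ->
  \sum_(z <- D (h * k)) phi z =
  \sum_(x <- D h) \sum_(y <- D k) phi (x.1 * y.1, x.2 * y.2).
Proof.
move=> hp; rewrite (sumHH' hp (cop_mul HD h k)) big_flatten big_map.
by apply: eq_bigr => x _; rewrite big_map.
Qed.

Lemma cocomS (M : zmodType) (phi : H * H -> M) h : HHc phi ->
  \sum_(z <- D h) phi z = \sum_(z <- D h) phi (z.2, z.1).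
Proof. by move=> hp; rewrite (sumHH' hp (cocomm HD h)) big_map. Qed.

Lemma addS (M : zmodType) (phi : H * H -> M) h k : HHc phi ->
  \sum_(z <- D (h + k)) phi z = \sum_(z <- D h) phi z + \sum_(z <- D k) phi z.
Proof. by move=> hp; rewrite (sumHH' hp (cop_add HD h k)) big_cat. Qed.

Lemma scaleS (M : zmodType) (phi : H * H -> M) (c : F) h : HHc phi ->
  \sum_(z <- D (c *: h)) phi z = \sum_(z <- D h) phi (c *: z.1, z.2).
Proof. by move=> hp; rewrite (sumHH' hp (cop_scale HD c h)) big_map. Qed.

Lemma ant0 : S 0 = 0.
Proof. by have := ant_scale HD 0 0; rewrite !scale0r. Qed.

Lemma ant_sum (I : Type) (r : seq I) (f : I -> H) :
  S (\sum_(i <- r) f i) = \sum_(i <- r) S (f i).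
Proof.
elim: r => [|i r IH]; first by rewrite !big_nil ant0.
by rewrite !big_cons ant_add IH.
Qed.
End Hopf.

Ltac pushk := rewrite -?scalerAl -?scalerAr ?ant_scale -?scalerAl -?scalerAr ?ant_scale
  -?scalerAl -?scalerAr -?scalerAl -?scalerAr.

Section AntMul.
Variable F : fieldType.
Variable H : algType F.
Variable HD : cocomHopf H.
Local Notation D := (cop HD).
Local Notation S := (ant HD).
Local Notation ep := (cou HD).

Lemma hhh1 (d e g : H) :
  HHHc (fun t : H * H * H => S (t.1.1 * d) * (t.1.2 * e) * (g * S t.2)).
Proof.
split => /=.
- by move=> * /=; rewrite mulrDl ant_add !mulrDl.
- by move=> * /=; rewrite mulrDl mulrDr mulrDl.
- by move=> * /=; rewrite ant_add !mulrDr.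
- by move=> * /=; pushk.
- by move=> * /=; pushk.
Qed.

Lemma hhh2 (a b g : H) :
  HHHc (fun t : H * H * H => S (a * t.1.1) * (b * t.1.2) * (S t.2 * g)).
Proof.
split => /=.
- by move=> * /=; rewrite mulrDr ant_add !mulrDl.
- by move=> * /=; rewrite mulrDr mulrDr mulrDl.
- by move=> * /=; rewrite ant_add mulrDl mulrDr.
- by move=> * /=; pushk.
- by move=> * /=; pushk.
Qed.

Lemma ant_mul h k : S (h * k) = S k * S h.
Proof.
have eK : S k = \sum_(y <- D k) ep y.1 *: S y.2.
  by rewrite -{1}(counit_l HD k) ant_sum; apply: eq_bigr => y _; rewrite ant_scale.
have eH : S h = \sum_(x <- D h) ep x.1 *: S x.2.
  by rewrite -{1}(counit_l HD h) ant_sum; apply: eq_bigr => y _; rewrite ant_scale.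
have -> : S k * S h = \sum_(x <- D h) \sum_(y <- D k)
     \sum_(x' <- D x.1) \sum_(y' <- D y.1)
        S (x'.1 * y'.1) * (x'.2 * y'.2) * (S y.2 * S x.2).
  rewrite eK eH mulr_suml.
  under eq_bigr do rewrite mulr_sumr.
  rewrite exchange_big; apply: eq_bigr => x _; apply: eq_bigr => y _.
  set W := S y.2 * S x.2.
  have -> : ep y.1 *: S y.2 * (ep x.1 *: S x.2) = (ep (x.1 * y.1) *: 1) * W.
    by rewrite cou_mul -!scalerAl -scalerAr mul1r scalerA [ep y.1 * _]mulrC.
  rewrite -(antipode_l HD) mulr_suml.
  rewrite (@mulS _ _ HD _ (fun z => S z.1 * z.2 * W)) //.
  split => /=.
  - by move=> * /=; rewrite ant_add !mulrDl.
  - by move=> * /=; rewrite mulrDr mulrDl.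
  - by move=> * /=; pushk.
have -> : \sum_(x <- D h) \sum_(y <- D k)
     \sum_(x' <- D x.1) \sum_(y' <- D y.1)
        S (x'.1 * y'.1) * (x'.2 * y'.2) * (S y.2 * S x.2) =
   \sum_(x <- D h) \sum_(x' <- D x.2) \sum_(y <- D k) \sum_(y' <- D y.1)
        S (x.1 * y'.1) * (x'.1 * y'.2) * (S y.2 * S x'.2).
  rewrite (eq_bigr (fun x => \sum_(x' <- D x.1) \sum_(y <- D k) \sum_(y' <- D y.1)
        S (x'.1 * y'.1) * (x'.2 * y'.2) * (S y.2 * S x.2))); last first.
    by move=> x _; rewrite exchange_big.
  pose phi := fun t : H * H * H => \sum_(y <- D k) \sum_(y' <- D y.1)
        S (t.1.1 * y'.1) * (t.1.2 * y'.2) * (S y.2 * S t.2).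
  have := @coassS _ _ HD _ phi h.
  apply.
  apply: HHHc_sum => y; apply: HHHc_sum => y'; exact: hhh1.
have -> : \sum_(x <- D h) \sum_(x' <- D x.2) \sum_(y <- D k) \sum_(y' <- D y.1)
        S (x.1 * y'.1) * (x'.1 * y'.2) * (S y.2 * S x'.2) =
   \sum_(x <- D h) \sum_(x' <- D x.2) \sum_(y <- D k) \sum_(y' <- D y.2)
        S (x.1 * y.1) * (x'.1 * y'.1) * (S y'.2 * S x'.2).
  apply: eq_bigr => x _; apply: eq_bigr => x' _.
  pose phi := fun t : H * H * H => S (x.1 * t.1.1) * (x'.1 * t.1.2) * (S t.2 * S x'.2).
  exact: (@coassS _ _ HD _ phi k (hhh2 _ _ _)).
have -> : \sum_(x <- D h) \sum_(x' <- D x.2) \sum_(y <- D k) \sum_(y' <- D y.2)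
        S (x.1 * y.1) * (x'.1 * y'.1) * (S y'.2 * S x'.2) =
   \sum_(x <- D h) \sum_(y <- D k) \sum_(x' <- D x.2)
        ep y.2 *: (S (x.1 * y.1) * x'.1 * S x'.2).
  apply: eq_bigr => x _; rewrite exchange_big; apply: eq_bigr => y _.
  apply: eq_bigr => x' _.
  rewrite (eq_bigr (fun y' => S (x.1 * y.1) * x'.1 * (y'.1 * S y'.2) * S x'.2)); last first.
    by move=> y' _; rewrite !mulrA.
  by rewrite -mulr_suml -mulr_sumr (antipode_r HD) -scalerAr mulr1 -scalerAl.
have -> : \sum_(x <- D h) \sum_(y <- D k) \sum_(x' <- D x.2)
        ep y.2 *: (S (x.1 * y.1) * x'.1 * S x'.2) =
   \sum_(x <- D h) \sum_(y <- D k) (ep x.2 * ep y.2) *: S (x.1 * y.1).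
  apply: eq_bigr => x _; apply: eq_bigr => y _.
  rewrite (eq_bigr (fun x' => ep y.2 *: (S (x.1 * y.1) * (x'.1 * S x'.2)))); last first.
    by move=> x' _; rewrite !mulrA.
  by rewrite -scaler_sumr -mulr_sumr (antipode_r HD) -scalerAr mulr1 scalerA mulrC.
rewrite -{1}(counit_r HD h) -{1}(counit_r HD k) mulr_suml ant_sum.
apply: eq_bigr => x _; rewrite mulr_sumr ant_sum; apply: eq_bigr => y _.
by rewrite -scalerAl -scalerAr ant_scale ant_scale scalerA.
Qed.
End AntMul.

Section T2.
Variable F : fieldType.
Variable H : algType F.
Variable HD : cocomHopf H.
Variable V : lmodType F.
Variable P : poissonPseudo HD V.
Local Notation D := (cop HD).
Local Notation S := (ant HD).
Local Notation ep := (cou HD).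
Local Notation act := (act P).
Local Notation "s ≈ t" := (fcong (relT2 (cop HD) act) s t) (at level 70).

Lemma rl s t : relT2 D act s t -> s ≈ t. Proof. exact: fc_rel. Qed.

Lemma t2_zero2 (f : H) (e : V) : [:: (f, 0, e)] ≈ [::].
Proof.
have h := r2_sc2 D act 0 f 0 e; rewrite scale0r scaler0 in h.
apply: fcT (rl (r2_zero1 D act 0 e)); apply: fcS; exact: rl.
Qed.

Lemma t2_zero3 (f g : H) : [:: (f, g, 0)] ≈ [::].
Proof.
have h := r2_sc3 D act 0 f g 0; rewrite !scale0r in h.
apply: fcT (rl (r2_zero1 D act g 0)); apply: fcS; exact: rl.
Qed.

Lemma flat_nil (U T : Type) (s : seq U) : flatten [seq ([::] : seq T) | _ <- s] = [::].
Proof. by elim: s. Qed.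

Lemma t2_sum3 (I : Type) (f g : H) (Z : I -> V) (r : seq I) :
  flatten [seq [:: (f, g, Z i)] | i <- r] ≈ [:: (f, g, \sum_(i <- r) Z i)].
Proof.
elim: r => [|i r IH] /=; first by rewrite big_nil; apply: fcS; apply: t2_zero3.
rewrite big_cons; apply: fcS; apply: fcT (rl (r2_add3 D act f g _ _)) _.
apply: (@fcCl _ _ _ _ [:: (f, g, Z i)]); exact: fcS.
Qed.

Lemma lift1 (A : H) (Q : H -> V) :
  (forall x y, Q (x + y) = Q x + Q y) -> (forall (k : F) x, Q (k *: x) = k *: Q x) ->
  forall s t, fcong (@relHH F H) s t ->
  flatten [seq [:: (A, z.1, Q z.2)] | z <- s] ≈ flatten [seq [:: (A, z.1, Q z.2)] | z <- t].
Proof.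
move=> qa qs; apply: fc_lift => s t [] /=.
- by move=> x y b; apply: rl; apply: r2_add2.
- by move=> a x y; rewrite qa; apply: rl; apply: r2_add3.
- move=> k a b; rewrite qs; apply: fcT (rl (r2_sc3 _ _ _ _ _ _)).
  apply: fcS; exact: rl (r2_sc2 _ _ _ _ _ _).
- by move=> b; apply: t2_zero2.
Qed.

Lemma lift2 (f g : H) (e : V) :
  forall s t, fcong (@relHH F H) s t ->
  flatten [seq [:: (g * z.1, f * z.2, e)] | z <- s] ≈ flatten [seq [:: (g * z.1, f * z.2, e)] | z <- t].
Proof.
apply: fc_lift => s t [] /=.
- by move=> x y b; rewrite mulrDr; apply: rl; apply: r2_add1.
- by move=> a x y; rewrite mulrDr; apply: rl; apply: r2_add2.
- by move=> k a b; rewrite -!scalerAr; apply: rl; apply: r2_sc2.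
- by move=> b; rewrite mulr0; apply: rl; apply: r2_zero1.
Qed.

Lemma lift3 (U : Type) (L : seq U) (A : H) (B : U -> H) (Q : U -> H -> V) :
  (forall u x y, Q u (x + y) = Q u x + Q u y) ->
  (forall u (k : F) x, Q u (k *: x) = k *: Q u x) ->
  forall s t, fcong (@relHHH F H) s t ->
  flatten [seq flatten [seq [:: (A * z.1.1, B u * z.1.2, Q u z.2)] | u <- L] | z <- s] ≈
  flatten [seq flatten [seq [:: (A * z.1.1, B u * z.1.2, Q u z.2)] | u <- L] | z <- t].
Proof.
move=> qa qs; apply: fc_lift => s t [] => [x y b c|a x y c|a b x y|k a b c|k a b c|b c] /=;
  rewrite ?cats0.
-   rewrite !flat_map1.
  apply: (fcT (t := flatten [seq [:: (A * x, B u * b, Q u c); (A * y, B u * b, Q u c)] | u <- L])); last (apply: fc_perm; exact: perm_inter).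
  rewrite -flat_map1; apply: fc_flat => u _.
  by rewrite mulrDr; apply: rl; apply: r2_add1.
-   rewrite !flat_map1.
  apply: (fcT (t := flatten [seq [:: (A * a, B u * x, Q u c); (A * a, B u * y, Q u c)] | u <- L])); last (apply: fc_perm; exact: perm_inter).
  rewrite -flat_map1; apply: fc_flat => u _.
  by rewrite mulrDr; apply: rl; apply: r2_add2.
-   rewrite !flat_map1.
  apply: (fcT (t := flatten [seq [:: (A * a, B u * b, Q u x); (A * a, B u * b, Q u y)] | u <- L])); last (apply: fc_perm; exact: perm_inter).
  rewrite -flat_map1; apply: fc_flat => u _.
  by rewrite qa; apply: rl; apply: r2_add3.
- apply: fc_flat => u _.
  by rewrite -!scalerAr; apply: rl; apply: r2_sc2.
- apply: fc_flat => u _.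
  by rewrite -!scalerAr qs; apply: rl; apply: r2_sc3.
- apply: (@fcT _ _ _ (flatten [seq ([::] : seq (H * H * V)) | _ <- L])); last by rewrite flat_nil; apply: fcR.
  apply: fc_flat => u _.
  by rewrite mulr0; apply: rl; apply: r2_zero1.
Qed.
End T2.

Section Rm.
Variable F : fieldType.
Variable H : algType F.
Variable HD : cocomHopf H.
Variable V : lmodType F.
Variable P : poissonPseudo HD V.
Local Notation D := (cop HD).
Local Notation S := (ant HD).
Local Notation ep := (cou HD).
Local Notation act := (act P).
Local Notation "s ≈ t" := (fcong (relT2 (cop HD) act) s t) (at level 70).

Variable m : V -> V -> V.
Hypothesis m_addl : forall u u' v, m (u + u') v = m u v + m u' v.
Hypothesis m_addr : forall u v v', m u (v + v') = m u v + m u v'.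
Hypothesis m_scl : forall (k : F) u v, m (k *: u) v = k *: m u v.
Hypothesis m_scr : forall (k : F) u v, m u (k *: v) = k *: m u v.
Hypothesis m_act : forall h u v, act h (m u v) = \sum_(x <- D h) m (act x.1 u) (act x.2 v).

Lemma act0l v : act 0 v = 0.
Proof. by have := act_scalel P 0 0 v; rewrite !scale0r. Qed.

Lemma act_suml (I : Type) (r : seq I) (f : I -> H) v :
  act (\sum_(i <- r) f i) v = \sum_(i <- r) act (f i) v.
Proof.
elim: r => [|i r IH]; first by rewrite !big_nil act0l.
by rewrite !big_cons act_addl IH.
Qed.

Lemma m0l v : m 0 v = 0. Proof. by have := m_scl 0 0 v; rewrite !scale0r. Qed.
Lemma m0r v : m v 0 = 0. Proof. by have := m_scr 0 v 0; rewrite !scale0r. Qed.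

Lemma m_suml (I : Type) (r : seq I) (f : I -> V) v :
  m (\sum_(i <- r) f i) v = \sum_(i <- r) m (f i) v.
Proof.
elim: r => [|i r IH]; first by rewrite !big_nil m0l.
by rewrite !big_cons m_addl IH.
Qed.

Lemma m_sumr (I : Type) (r : seq I) (f : I -> V) v :
  m v (\sum_(i <- r) f i) = \sum_(i <- r) m v (f i).
Proof.
elim: r => [|i r IH]; first by rewrite !big_nil m0r.
by rewrite !big_cons m_addr IH.
Qed.

Lemma lemK h e w :
  \sum_(x <- D h) act x.1 (m e (act (S x.2) w)) = m (act h e) w.
Proof.
rewrite (eq_bigr (fun x => \sum_(y <- D x.1) m (act y.1 e) (act (y.2 * S x.2) w))); last first.
  by move=> x _; rewrite m_act; apply: eq_bigr => y _; rewrite act_mul.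
pose phi := fun t : H * H * H => m (act t.1.1 e) (act (t.1.2 * S t.2) w).
rewrite (@coassS _ _ HD _ phi h); last first.
  split; rewrite /phi /=.
  - by move=> *; rewrite act_addl m_addl.
  - by move=> *; rewrite mulrDl act_addl m_addr.
  - by move=> *; rewrite ant_add mulrDr act_addl m_addr.
  - by move=> *; rewrite act_scalel m_scl -scalerAl act_scalel m_scr.
  - by move=> *; rewrite act_scalel m_scl ant_scale -scalerAr act_scalel m_scr.
rewrite /phi /=.
rewrite (eq_bigr (fun x => ep x.2 *: m (act x.1 e) w)); last first.
  move=> x _; rewrite -m_sumr -act_suml (antipode_r HD).
  by rewrite act_scalel act_one m_scr.
rewrite -{2}(counit_r HD h) act_suml m_suml; apply: eq_bigr => x _.
by rewrite act_scalel m_scl.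
Qed.

Variable c : V.
Definition Rm (s : seq (H * H * V)) : seq (H * H * V) :=
  flatten [seq [seq (t.1.1, x.1, m t.2 (act (S x.2) c)) | x <- D t.1.2] | t <- s].

Lemma Rm_cat s t : Rm (s ++ t) = Rm s ++ Rm t.
Proof. by rewrite /Rm map_cat flatten_cat. Qed.

Let Q e := fun b => m e (act (S b) c).
Lemma Qa e x y : Q e (x + y) = Q e x + Q e y.
Proof. by rewrite /Q ant_add act_addl m_addr. Qed.
Lemma Qs e (k : F) x : Q e (k *: x) = k *: Q e x.
Proof. by rewrite /Q ant_scale act_scalel m_scr. Qed.

Lemma Rm_bal f g h e :
  Rm [seq (f * x.1, g * x.2, e) | x <- D h] ≈ Rm [:: (f, g, act h e)].
Proof.
rewrite /Rm /= cats0 -map_comp.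
apply: (fcT (t := flatten [seq flatten [seq flatten [seq
   [:: (f * x.1, u.1 * v.1, m e (act (S v.2) (act (S u.2) c)))] | v <- D x.2] | u <- D g]
   | x <- D h])).
  apply: fc_flat => x _ /=.
  rewrite -flat_map1.
  apply: fcT (lift1 P (f * x.1) (Qa e) (Qs e) (cop_mul HD g x.2)) _.
  apply: fcE; rewrite flat_flat; congr flatten; apply: eq_map => u.
  rewrite -map_comp; congr flatten; apply: eq_map => v /=.
  by rewrite /Q ant_mul act_mul.
apply: (fcT (t := flatten [seq flatten [seq flatten [seq
   [:: (f * x.1, u.1 * v.1, m e (act (S v.2) (act (S u.2) c)))] | u <- D g] | v <- D x.2]
   | x <- D h])).
  apply: fc_flat => x _; apply: fc_perm; exact: perm_exch.
pose Q' (u : H * H) d := m e (act (S d) (act (S u.2) c)).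
have Q'a : forall u x y, Q' u (x + y) = Q' u x + Q' u y.
  by move=> u x y; rewrite /Q' ant_add act_addl m_addr.
have Q's : forall u (k : F) x, Q' u (k *: x) = k *: Q' u x.
  by move=> u k x; rewrite /Q' ant_scale act_scalel m_scr.
have L4 := lift3 P (D g) f (fun u => u.1) Q'a Q's (fc_sym (cop_coass HD h)).
rewrite !flat_flat in L4.
apply: (fcT (t := flatten [seq flatten [seq flatten [seq
   [:: (f * y.1, u.1 * y.2, m e (act (S x.2) (act (S u.2) c)))] | u <- D g] | y <- D x.1]
   | x <- D h])).
  apply: fcT (fcT _ L4) _; apply: fcE; congr flatten; apply: eq_map => x;
    rewrite -map_comp //.
apply: (fcT (t := flatten [seq flatten [seq flatten [seq
   [:: (f * y.1, u.1 * y.2, m e (act (S x.2) (act (S u.2) c)))] | y <- D x.1] | u <- D g]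
   | x <- D h])).
  apply: fc_flat => x _; apply: fc_perm; exact: perm_exch.
apply: (fcT (t := flatten [seq flatten [seq
   [:: (f, u.1, act x.1 (m e (act (S x.2) (act (S u.2) c))))] | u <- D g]
   | x <- D h])).
  apply: fc_flat => x _; apply: fc_flat => u _.
  rewrite flat_map1; apply: rl; exact: r2_bal.
apply: (fcT (t := flatten [seq flatten [seq
   [:: (f, u.1, act x.1 (m e (act (S x.2) (act (S u.2) c))))] | x <- D h]
   | u <- D g])).
  apply: fc_perm; exact: perm_exch.
apply: (@fcT _ _ _ (flatten [seq [:: (f, x.1, m (act h e) (act (S x.2) c))] | x <- D g])); last by rewrite flat_map1; apply: fcR.
apply: fc_flat => u _.
apply: fcT (t2_sum3 P _ _ _ _) _.
by rewrite lemK; apply: fcR.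
Qed.

Lemma fc_map2 (U : Type) (f : U -> H * H * V) (g : U -> seq (H * H * V)) s :
  (forall x, [:: f x] ≈ g x) -> map f s ≈ flatten (map g s).
Proof. by move=> h; rewrite -flat_map1; apply: fc_flat => x _; apply: h. Qed.

Lemma Rm_cong s t : s ≈ t -> Rm s ≈ Rm t.
Proof.
apply: fc_lift => {s t} s t [] => [x y g e|f x y e|f g x y|k f g e|k f g e|g e|f g h e] /=;
  rewrite ?cats0.
- apply: fcT (fc_map2 _ _) _.
    by move=> z; apply: rl; apply: (r2_add1 _ _ x y z.1).
  by apply: fc_perm; exact: perm_inter.
- have := lift1 P f (Qa e) (Qs e) (cop_add HD x y).
  by rewrite !flat_map1 map_cat.
- apply: fcT (fc_map2 _ _) _.
    by move=> z; rewrite m_addl; apply: rl; apply: (r2_add3 _ _ f z.1).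
  by apply: fc_perm; exact: perm_inter.
- have := lift1 P f (Qa e) (Qs e) (cop_scale HD k g).
  rewrite !flat_map1 -map_comp => h; apply: fcT _ (fcS h).
  rewrite -flat_map1 -[X in _ ≈ X]flat_map1; apply: fc_flat => z _.
  by apply: rl; apply: r2_sc2.
- rewrite -flat_map1 -[X in _ ≈ X]flat_map1; apply: fc_flat => z _ /=.
  by rewrite m_scl; apply: rl; apply: r2_sc3.
- apply: (@fcT _ _ _ (flatten [seq ([::] : seq (H * H * V)) | _ <- D g])); last by rewrite flat_nil; apply: fcR.
  rewrite -flat_map1; apply: fc_flat => z _; apply: rl; apply: r2_zero1.
- have := Rm_bal f g h e; rewrite /Rm /= cats0 -map_comp //.
Qed.
End Rm.

Section Ops.
Variable F : fieldType.
Variable H : algType F.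
Variable HD : cocomHopf H.
Variable V : lmodType F.
Variable P : poissonPseudo HD V.
Local Notation D := (cop HD).
Local Notation S := (ant HD).
Local Notation act := (act P).
Local Notation "s ≈ t" := (fcong (relT2 (cop HD) act) s t) (at level 70).

Lemma swap_cong s t : s ≈ t -> swapT2 s ≈ swapT2 t.
Proof.
rewrite /swapT2 -(flat_map1 _ s) -(flat_map1 _ t); apply: fc_lift => {s t} s t
  [] => [x y g e|f x y e|f g x y|k f g e|k f g e|g e|f g h e] /=.
- by apply: rl; apply: r2_add2.
- by apply: rl; apply: r2_add1.
- by apply: rl; apply: r2_add3.
- by apply: fcS; apply: rl; apply: r2_sc2.
- apply: fcT (rl (r2_sc3 _ _ k g f e)); apply: fcS; apply: rl; apply: r2_sc2.
- exact: t2_zero2.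
- rewrite flat_map1 -map_comp.
  have := lift2 P f g e (cocomm HD h); rewrite !flat_map1 -map_comp => h1.
  apply: fcT (fcS h1) _; apply: rl; apply: r2_bal.
Qed.

Lemma scale_cong (k : F) s t : s ≈ t -> scaleT2 k s ≈ scaleT2 k t.
Proof.
rewrite /scaleT2 -(flat_map1 _ s) -(flat_map1 _ t); apply: fc_lift => {s t} s t
  [] => [x y g e|f x y e|f g x y|c f g e|c f g e|g e|f g h e] /=.
- by rewrite scalerDr; apply: rl; apply: r2_add1.
- by apply: rl; apply: r2_add2.
- by apply: rl; apply: r2_add3.
- by rewrite scalerA mulrC -scalerA; apply: rl; apply: r2_sc2.
- by rewrite scalerA mulrC -scalerA; apply: rl; apply: r2_sc3.
- by rewrite scaler0; apply: rl; apply: r2_zero1.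
- rewrite flat_map1 -map_comp /=.
  have -> : [seq (k *: (f * x.1), g * x.2, e) | x <- D h] =
            [seq ((k *: f) * x.1, g * x.2, e) | x <- D h].
    by apply: eq_map => x; rewrite scalerAl.
  by apply: rl; apply: r2_bal.
Qed.

Lemma scale_cat (k : F) (s t : seq (H * H * V)) : scaleT2 k (s ++ t) = scaleT2 k s ++ scaleT2 k t.
Proof. exact: map_cat. Qed.
Lemma swap_cat (s t : seq (H * H * V)) : swapT2 (s ++ t) = swapT2 s ++ swapT2 t.
Proof. exact: map_cat. Qed.
Lemma scale_scale (a b : F) (s : seq (H * H * V)) : scaleT2 a (scaleT2 b s) = scaleT2 (a * b) s.
Proof. by rewrite /scaleT2 -map_comp; apply: eq_map => t /=; rewrite scalerA. Qed.
Lemma scale1 (s : seq (H * H * V)) : scaleT2 1 s = s.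
Proof. by rewrite /scaleT2 -[RHS]map_id; apply: eq_map => [[[x y] z]] /=; rewrite scale1r. Qed.
Lemma fc_mapE (U : Type) (f g : U -> H * H * V) s :
  (forall x, [:: f x] ≈ [:: g x]) -> map f s ≈ map g s.
Proof. by move=> h; rewrite -(flat_map1 f) -(flat_map1 g); apply: fc_flat => x _. Qed.

Lemma swap_scale (k : F) (s : seq (H * H * V)) : swapT2 (scaleT2 k s) ≈ scaleT2 k (swapT2 s).
Proof.
rewrite /swapT2 /scaleT2 -!map_comp; apply: fc_mapE => t /=.
by apply: fcS; apply: rl; apply: r2_sc2.
Qed.

Variable m : V -> V -> V.
Definition Lm (b : V) (s : seq (H * H * V)) : seq (H * H * V) :=
  flatten [seq [seq (x.1, t.1.2, m t.2 (act (S x.2) b)) | x <- D t.1.1] | t <- s].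

Lemma Lm_eq b s : swapT2 (Rm P m b (swapT2 s)) = Lm b s.
Proof.
rewrite /swapT2 /Rm /Lm map_flatten -!map_comp; congr flatten; apply: eq_map => t /=.
by rewrite -map_comp.
Qed.

Lemma Rm_scale b (k : F) s : Rm P m b (scaleT2 k s) = scaleT2 k (Rm P m b s).
Proof.
rewrite /Rm /scaleT2 map_flatten -!map_comp; congr flatten; apply: eq_map => t /=.
by rewrite -!map_comp.
Qed.
End Ops.

Section Main.
Variable F : fieldType.
Variable H : algType F.
Variable HD : cocomHopf H.
Variable V : lmodType F.
Variable P : poissonPseudo HD V.
Local Notation D := (cop HD).
Local Notation S := (ant HD).
Local Notation act := (act P).
Local Notation pm := (pmul P).
Local Notation "s ≈ t" := (fcong (relT2 (cop HD) act) s t) (at level 70).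

Lemma pmr_act h u v :
  act h (pm v u) = \sum_(x <- D h) pm (act x.2 v) (act x.1 u).
Proof.
rewrite act_pmul (@cocomS _ _ HD _ (fun z => pm (act z.1 v) (act z.2 u))) //.
split => /=.
- by move=> *; rewrite act_addl pmul_addl.
- by move=> *; rewrite act_addl pmul_addr.
- by move=> *; rewrite !act_scalel pmul_scalel pmul_scaler.
Qed.

Lemma RC c s t : s ≈ t -> Rm P pm c s ≈ Rm P pm c t.
Proof. exact: (Rm_cong (pmul_addl P) (pmul_addr P) (pmul_scalel P) (pmul_scaler P) (act_pmul P)). Qed.

Lemma RC' c s t : s ≈ t -> Rm P (fun u v => pm v u) c s ≈ Rm P (fun u v => pm v u) c t.
Proof.
apply: (Rm_cong _ _ _ _ pmr_act).
- by move=> *; rewrite pmul_addr.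
- by move=> *; rewrite pmul_addl.
- by move=> *; rewrite pmul_scaler.
- by move=> *; rewrite pmul_scalel.
Qed.

Lemma LC' b s t : s ≈ t -> Lm P (fun u v => pm v u) b s ≈ Lm P (fun u v => pm v u) b t.
Proof. by move=> h; rewrite -!Lm_eq; apply: swap_cong; apply: RC'; apply: swap_cong. Qed.

Lemma sign_lm q pb b s : par P pb b -> (forall t, List.In t s -> par P q t.2) ->
  Lm P pm b s ≈ scaleT2 ((-1) ^+ (q && pb)) (Lm P (fun u v => pm v u) b s).
Proof.
move=> hb; elim: s => [|t s IH] hs; first exact: fcR.
rewrite /Lm /= scale_cat; apply: fcC; last by apply: IH => u hu; apply: hs; right.
rewrite /scaleT2 -map_comp; apply: fc_mapE => x /=.
rewrite (pmul_supercomm (hs t (or_introl erefl)) (act_par _ hb)).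
by apply: fcS; apply: rl; apply: r2_sc3.
Qed.

Lemma swapR (q pb : bool) (k : F) b s s' s'' :
  par P pb b -> s ≈ scaleT2 k (swapT2 s') -> s' ≈ s'' ->
  (forall t, List.In t s'' -> par P q t.2) ->
  swapT2 (Rm P pm b s) ≈ scaleT2 (k * (-1) ^+ (q && pb)) (Lm P (fun u v => pm v u) b s').
Proof.
move=> hb h1 h2 hs.
apply: fcT (swap_cong (RC b (fcT h1 (scale_cong k (swap_cong h2))))) _.
rewrite Rm_scale; apply: fcT (swap_scale _ _ _) _.
rewrite Lm_eq -scale_scale; apply: scale_cong.
apply: fcT (sign_lm hb hs) _; apply: scale_cong; apply: LC'; exact: fcS.
Qed.
End Main.

Section Main2.
Variable F : fieldType.
Variable H : algType F.
Variable HD : cocomHopf H.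
Variable V : lmodType F.
Variable P : poissonPseudo HD V.
Local Notation D := (cop HD).
Local Notation S := (ant HD).
Local Notation act := (act P).
Local Notation pm := (pmul P).
Local Notation "s ≈ t" := (fcong (relT2 (cop HD) act) s t) (at level 70).
Local Notation Lm' := (Lm P (fun u v => pm v u)).

Lemma signA (pa pb pc : bool) :
  - (-1) ^+ (pc && (pa (+) pb)) * (-1) ^+ (pa && pb) *
    (- (-1) ^+ (pb && pc) * (-1) ^+ ((pb (+) pc) && pa)) = 1 :> F.
Proof. by case: pa; case: pb; case: pc; rewrite /= ?expr0 ?expr1; ring. Qed.

Lemma signB (pa pb pc : bool) :
  - (-1) ^+ (pc && (pa (+) pb)) *
    (- (-1) ^+ (pa && pc) * (-1) ^+ ((pa (+) pc) && pb)) = (-1) ^+ (pa && pb) :> F.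
Proof. by case: pa; case: pb; case: pc; rewrite /= ?expr0 ?expr1; ring. Qed.

Lemma mainH pa pb pc a b c : par P pa a -> par P pb b -> par P pc c ->
  br P (pm a b) c ≈ Lm' a (br P b c) ++ scaleT2 ((-1) ^+ (pa && pb)) (Lm' b (br P a c)).
Proof.
move=> ha hb hc.
have hab := pmul_par ha hb.
have s1 := br_skew hc hab.
have s2 := br_leibniz hc ha hb.
have s3 := br_skew ha hc.
have s4 := br_skew hb hc.
case: (br_even ha hc) => sX [hX pX].
case: (br_even hb hc) => sY [hY pY].
have hB := swapR hb s3 hX pX.
have hA := swapR ha s4 hY pY.
apply: fcT s1 _.
apply: fcT (scale_cong _ (swap_cong s2)) _.
rewrite swap_cat scale_cat.
apply: fcT (fc_comm _ _ _) _.
apply: fcC.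
- apply: fcT (scale_cong _ (swap_scale _ _ _)) _; rewrite scale_scale.
  apply: fcT (scale_cong _ hA) _; rewrite scale_scale.
  set k := (X in scaleT2 X _).
  rewrite /k signA.
  by rewrite scale1; apply: fcR.
- apply: fcT (scale_cong _ hB) _; rewrite scale_scale.
  set k := (X in scaleT2 X _ ≈ _).
  rewrite /k signB.
  exact: fcR.
Qed.

Lemma Lm_cat m b (s t : seq (H * H * V)) : Lm P m b (s ++ t) = Lm P m b s ++ Lm P m b t.
Proof. by rewrite /Lm map_cat flatten_cat. Qed.
End Main2.

Unset Implicit Arguments.
Theorem lemma4p7 (F : fieldType) (charF0 : [pchar F] =i pred0)
  (H : algType F) (HD : cocomHopf H) (V : lmodType F) (P : poissonPseudo HD V)
  (pa pb : bool) (a b c : V) :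
  par P pa a -> par P pb b ->
  fcong (relT2 (cop HD) (act P)) (br P (pmul P a b) c)
    (lmulT (cop HD) (act P) (ant HD) (pmul P) a (br P b c) ++
     scaleT2 ((-1) ^+ (pa && pb))
       (lmulT (cop HD) (act P) (ant HD) (pmul P) b (br P a c))).
Proof.
move=> ha hb.
case: (par_decomp P c) => c0 [c1 [h0 h1 ->]].
apply: fcT (br_addr P _ _ _) _.
apply: fcT (fcC (mainH ha hb h0) (mainH ha hb h1)) _.
apply: fcS.
change (lmulT (cop HD) (act P) (ant HD) (pmul P) a (br P b (c0 + c1))) with
  (Lm P (fun u v => pmul P v u) a (br P b (c0 + c1))).
change (lmulT (cop HD) (act P) (ant HD) (pmul P) b (br P a (c0 + c1))) with
  (Lm P (fun u v => pmul P v u) b (br P a (c0 + c1))).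
apply: fcT (fcC (LC' a (br_addr P b c0 c1)) (scale_cong _ (LC' b (br_addr P a c0 c1)))) _.
rewrite !Lm_cat scale_cat.
apply: fc_perm; rewrite perm_catACA; exact: perm_refl.
Qed.
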